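(* Let $m\geqslant 2$ be an integer and let $\pi$ be an irreducible unitary cuspidal representation of $GL_m(\mathbb A_{\mathbb Q})$. For any prime $p$ such that $\pi_p$ is unramified, $$|\lambda_\pi(p^m)|+|\lambda_\pi(p^{m-1})|+\cdots+|\lambda_\pi(p)|\geqslant \frac1m.$$
   Context: To $\pi=\otimes\pi_p$ one attaches $L(s,\pi)=\prod_p\prod_{j=1}^m(1-\alpha_\pi(p,j)p^{-s})^{-1}$ for $\Re s>1$, where $\{\alpha_\pi(p,j)\}_{j=1}^m$ are the local (Satake) parameters of $\pi_p$. Writing $L(s,\pi)=\sum_{n\ge1}\lambda_\pi(n)n^{-s}$, one has $\lambda_\pi(n)=\prod_{p^\nu\| n}\sum_{\nu_1+\cdots+\nu_m=\nu}\alpha_\pi(p,1)^{\nu_1}\cdots\alpha_\pi(p,m)^{\nu_m}$. *)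

(* Defs.v *)
From HB Require Import structures.
From mathcomp Require Import all_boot all_order all_algebra.
From mathcomp Require Import perm complex.
Set Implicit Arguments. Unset Strict Implicit. Unset Printing Implicit Defensive.
Import Order.TTheory GRing.Theory Num.Theory.
Local Open Scope ring_scope.

(* Local Satake parameters of pi_p : a family alpha : 'I_m -> C.
   lambda_pi(p^nu) = sum_{nu_1+...+nu_m = nu} prod_j alpha_j^{nu_j}
   (exponent vectors nu_j range over 'I_(nu.+1), i.e. 0 <= nu_j <= nu). *)
Definition lambda_pp (R : rcfType) (m : nat) (alpha : 'I_m -> R[i]) (nu : nat)
  : R[i] :=
  \sum_(f : {ffun 'I_m -> 'I_nu.+1} | (\sum_(j < m) (f j : nat))%N == nu)
     \prod_(j < m) alpha j ^+ (f j).

(* Local shadow of "pi unitary cuspidal on GL_m(A_Q), pi_p unramified", in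
   terms of the Satake parameters at p:
   - unitarity (pi~ = conj pi): the multiset {alpha_j} equals
     {conj(alpha_j)^{-1}} (in particular every alpha_j is nonzero);
   - generic/cuspidal: the Luo-Rudnick-Sarnak type bound |alpha_j|^2 < p. *)
Definition unitary_unramified_satake (R : rcfType) (m p : nat)
  (alpha : 'I_m -> R[i]) : Prop :=
  (exists s : {perm 'I_m}, forall j, alpha (s j) * (alpha j)^* = 1)
  /\ (forall j, `|alpha j| ^+ 2 < p%:R).

(* Main.v *)
Require Import Defs.
From HB Require Import structures.
From mathcomp Require Import all_boot all_order all_algebra.
From mathcomp Require Import perm complex ring.
Import Order.TTheory GRing.Theory Num.Theory.
Local Open Scope ring_scope.

Lemma Eseq_coef (C : comRingType) (s : seq C) :
  let E := \prod_(a <- s) (1 - a%:P * 'X) in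
  [/\ E`_0 = 1, E`_(size s) = \prod_(a <- s) (- a) &
      forall k, (size s < k)%N -> E`_k = 0].
Proof.
elim: s => [|a s [H0 Hs Hk]] /=.
  rewrite !big_nil; split; [by rewrite coef1 | by rewrite coef1 |].
  by move=> [|k] //= _; rewrite coef1.
have Hc : forall k, (\prod_(b <- a :: s) (1 - b%:P * 'X))`_k =
   (\prod_(b <- s) (1 - b%:P * 'X))`_k -
     a * (if k == 0%N then 0 else (\prod_(b <- s) (1 - b%:P * 'X))`_k.-1).
  move=> k; rewrite big_cons mulrBl mul1r -mulrA coefB coefCM coefXM //.
split.
- by rewrite Hc H0 /= mulr0 subr0.
- by rewrite Hc /= Hk // Hs big_cons sub0r mulNr.
- move=> k Hsk; rewrite Hc Hk; last by apply: ltn_trans Hsk.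
  case: k Hsk => [//|k] /= Hsk; rewrite Hk // mulr0 subr0 //.
Qed.

Definition lowp (C : comRingType) (N : nat) (q : {poly C}) :=
  q`_0 = 1 /\ forall i, (0 < i <= N)%N -> q`_i = 0.

Arguments lowp {C}.
Lemma lowpM (C : comRingType) (N : nat) (p q : {poly C}) :
  lowp N p -> lowp N q -> lowp N (p * q).
Proof.
move=> [p0 pi] [q0 qi]; split; first by rewrite coef0M p0 q0 mulr1.
move=> i /andP [i0 iN]; rewrite coefM big1 // => [[k /= Hk]] _.
case: (posnP k) => [->|k0]; first by rewrite subn0 qi ?i0 ?iN // mulr0.
by rewrite pi ?mul0r // k0 /= (leq_trans _ iN) // -ltnS.
Qed.

Lemma geom (C : comRingType) (x : C) n :
  (\sum_(k < n) x ^+ k) * (1 - x) = 1 - x ^+ n.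
Proof.
elim: n => [|n IH]; first by rewrite big_ord0 mul0r expr0 subrr.
by rewrite big_ord_recr /= mulrDl IH mulrBr mulr1 exprSr; ring.
Qed.

Definition Qp (R : rcfType) (m : nat) (alpha : 'I_m -> R[i]) (N : nat) : {poly R[i]} :=
  \prod_(j < m) \sum_(k < N.+1) ((alpha j)%:P * 'X) ^+ k.
Definition Ep (R : rcfType) (m : nat) (alpha : 'I_m -> R[i]) : {poly R[i]} :=
  \prod_(j < m) (1 - (alpha j)%:P * 'X).

Arguments Qp {R m}.
Arguments Ep {R m}.
Lemma QE_low (R : rcfType) (m : nat) (alpha : 'I_m -> R[i]) (N : nat) :
  lowp N (Qp alpha N * Ep alpha).
Proof.
rewrite /Qp /Ep -big_split /=.
under eq_bigr => j _ do rewrite geom.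
apply: (big_ind (lowp N)).
- split; first by rewrite coef1.
  by move=> [|k] //= _; rewrite coef1.
- exact: lowpM.
move=> j _; split.
  by rewrite coefB coef1 exprMn -rmorphXn coefCM coefXn mulr0 subr0.
move=> k /andP [k0 kN].
rewrite coefB coef1 exprMn -rmorphXn coefCM coefXn.
rewrite (gtn_eqF k0) (ltn_eqF) ?mulr0 ?subr0 //.
Qed.

Lemma Q_coef (R : rcfType) (m : nat) (alpha : 'I_m -> R[i]) (N n : nat) :
  (n <= N)%N -> (Qp alpha N)`_n = lambda_pp alpha n.
Proof.
move=> nN.
rewrite /Qp.
under eq_bigr => j _ do under eq_bigr => k _ do rewrite exprMn -rmorphXn.
rewrite bigA_distr_bigA /=.
rewrite coef_sum.
under eq_bigr => f _ do rewrite big_split /= -rmorph_prod prodrXr coefCM coefXn.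
rewrite (bigID (fun f : {ffun 'I_m -> 'I_N.+1} => (\sum_(j < m) (f j : nat))%N == n)) /=.
rewrite [X in _ + X]big1 ?addr0; last first.
  by move=> f /negbTE H; rewrite eq_sym H mulr0.
under eq_bigr => f /eqP H do rewrite H eqxx mulr1.
have le : (n.+1 <= N.+1)%N by [].
pose h := fun g : {ffun 'I_m -> 'I_n.+1} => [ffun j => widen_ord le (g j)].
pose h' := fun f : {ffun 'I_m -> 'I_N.+1} => [ffun j => (inord (f j) : 'I_n.+1)].
rewrite (reindex_onto h h').
  rewrite /lambda_pp; apply: eq_big => g.
    have -> : h' (h g) = g.
      by apply/ffunP => j; rewrite !ffunE; apply: val_inj; rewrite /= inordK.
    rewrite eqxx andbT; congr (_ == _); apply: eq_bigr => j _; by rewrite ffunE.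
  by move=> _; apply: eq_bigr => j _; rewrite ffunE.
move=> f /eqP H; apply/ffunP => j; rewrite !ffunE; apply: val_inj => /=.
rewrite inordK // ltnS -H (bigD1 j) //=; exact: leq_addr.
Qed.

Lemma Ep_top (R : rcfType) (m : nat) (alpha : 'I_m -> R[i]) :
  (Ep alpha)`_0 = 1 /\ `|(Ep alpha)`_m| = `|\prod_(j < m) alpha j|.
Proof.
have -> : Ep alpha = \prod_(a <- map alpha (enum 'I_m)) (1 - a%:P * 'X).
  by rewrite big_map big_enum.
have [H0 Hs _] := @Eseq_coef _ (map alpha (enum 'I_m)).
split => //.
rewrite size_map size_enum_ord in Hs; rewrite Hs big_map big_enum /=.
by rewrite !normr_prod; apply: eq_bigr => j _; rewrite normrN.
Qed.

Lemma unit_prod (R : rcfType) (m : nat) (alpha : 'I_m -> R[i]) (s : {perm 'I_m}) :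
  (forall j, alpha (s j) * (alpha j)^* = 1) -> `|\prod_(j < m) alpha j| = 1.
Proof.
move=> Hs.
have : \prod_(j < m) alpha (s j) * \prod_(j < m) (alpha j)^* = 1.
  by rewrite -big_split /= big1.
rewrite -(@reindex_inj _ _ _ _ s xpredT alpha (@perm_inj _ s)) /= -rmorph_prod -normCK => H.
apply/eqP; rewrite -(@eqrXn2 _ 2) // ?H ?expr1n //.
Qed.

Lemma rev_sum (C : numDomainType) (F : nat -> C) n :
  \sum_(k < n) F (n - k)%N = \sum_(1 <= k < n.+1) F k.
Proof.
rewrite big_nat_rev big_add1 /= big_mkord; apply: eq_bigr => k _.
by congr F; rewrite add1n subSS.
Qed.

Theorem lemma4p12 (R : rcfType) (m p : nat) (alpha : 'I_m -> R[i]) :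
  (2 <= m)%N -> prime p -> unitary_unramified_satake p alpha ->
  \sum_(1 <= k < m.+1) `|lambda_pp alpha k| >= (m%:R)^-1.
Proof.
move=> m2 _ [[s Hs] _].
set h := lambda_pp alpha.
set c := fun k => (Ep alpha)`_k.
set S := \sum_(1 <= k < m.+1) `|h k|.
have [c0 cm] := @Ep_top _ _ alpha.
rewrite (@unit_prod _ _ alpha s Hs) in cm.
have [L0 Li] := @QE_low _ _ alpha m.
have h0 : h 0%N = 1.
  by move: L0; rewrite coef0M c0 mulr1 Q_coef.
have rel : forall n, (0 < n <= m)%N ->
    c n = - \sum_(k < n) c k * h (n - k)%N.
  move=> n Hn; have := Li n Hn; rewrite mulrC coefM big_ord_recr /= subnn (@Q_coef _ _ alpha m 0) // -/h h0 mulr1.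
  have -> : \sum_(i < n) (Ep alpha)`_i * (Qp alpha m)`_(n - i) =
            \sum_(k < n) c k * h (n - k)%N.
    apply: eq_bigr => k _; rewrite Q_coef //; apply: leq_trans (leq_subr _ _) _.
    by case/andP: Hn.
  by move/eqP; rewrite addrC addr_eq0 => /eqP.
have Sge : 0 <= S by apply: sumr_ge0 => k _.
have T : forall n, (n <= m)%N -> \sum_(k < n) `|h (n - k)%N| <= S.
  move=> n nm; rewrite (@rev_sum _ (fun k => `|h k|)) /S.
  rewrite (big_cat_nat _ (n := n.+1) (p := m.+1)) //=.

  by rewrite lerDl sumr_ge0.
have bound : forall n, (0 < n <= m)%N -> (forall k, (k < n)%N -> `|c k| <= 1) ->
    `|c n| <= S.
  move=> n Hn Hk; rewrite rel // normrN.
  apply: le_trans (ler_norm_sum _ _ _) _.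
  apply: le_trans (T n _); last by case/andP: Hn.
  apply: ler_sum => k _; rewrite normrM.
  by rewrite -[X in _ <= X]mul1r ler_wpM2r // Hk.
have S1 : 1 <= S.
  have Sreal : S \is Num.real by apply: ger0_real.
  case: (boolP (S <= 1)) => SL; last first.
    by rewrite -(real_ltNge (real1 _) Sreal) in SL; apply: ltW.
  have B : forall n, (n <= m)%N -> forall k, (k <= n)%N -> `|c k| <= 1.
    elim=> [|n IH] nm k kn.
      by move: kn; rewrite leqn0 => /eqP ->; rewrite /c c0 normr1.
    rewrite leq_eqVlt in kn; case/orP: kn => [/eqP ->|kn].
      apply: le_trans SL; apply: bound; first by rewrite nm.
      by move=> k' k'n; apply: IH => //; apply: ltnW.
    by apply: IH => //; apply: ltnW.
  rewrite -cm; apply: bound; first by rewrite leqnn andbT; apply: ltnW.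
  by move=> k km; apply: (B m) => //; apply: ltnW.
apply: le_trans S1.
rewrite invf_le1 ?ltr0n ?ler1n; by apply: leq_trans m2.
Qed.
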